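(* Let $G$ be a SIN topological group and $\xi=(E\xrightarrow{p}X)$ a numerable principal $G$-bundle with gauge group $\mathcal G$. Then $\mathcal G$, endowed with the uniform structure $\mathbf U_{\mathcal G}$, is a topological group. Moreover, $\mathcal G$ is then SIN.
   Context: A topological group is SIN if its identity element has a fundamental system of neighbourhoods invariant under conjugation. The gauge group $\mathcal G$ is the group of $G$-equivariant homeomorphisms $\chi:E\to E$ with $p\circ\chi=p$. Let $\gamma:E\times_XE\to G$ be defined by $y=z\cdot\gamma(y,z)$. Let $\mathcal V_G$ be the set of open sets $V\subset G$ containing the identity with $V=V^{-1}$. For $K\subset X$ compact and $V\in\mathcal V_G$ let $\mathcal O^{\mathcal G}(K,V)=\{(\chi,\tilde\chi)\in\mathcal G\times\mathcal G:\gamma(\chi(z),\tilde\chi(z))\in V\ \forall z\in p^{-1}(K)\}$. $\mathbf U_{\mathcal G}$ is the uniform structure on $\mathcal G$ having these sets as a fundamental system of entourages; $\mathcal G$ carries the induced topology. *)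

(* Defs.v *)
From HB Require Import structures.
From mathcomp Require Import all_boot all_order all_algebra.
From mathcomp Require Import all_classical all_reals all_analysis.
From mathcomp Require Import Rstruct Rstruct_topology.
Set Implicit Arguments. Unset Strict Implicit. Unset Printing Implicit Defensive.
Import Order.TTheory GRing.Theory Num.Theory.
Local Open Scope classical_set_scope.
Local Open Scope ring_scope.

Definition is_group (G : Type) (mul : G -> G -> G) (inv : G -> G) (one : G) :=
  [/\ (forall a b c, mul a (mul b c) = mul (mul a b) c),
      (forall a, mul one a = a), (forall a, mul a one = a),
      (forall a, mul (inv a) a = one) & (forall a, mul a (inv a) = one)].

Definition is_topological_group (G : topologicalType)
  (mul : G -> G -> G) (inv : G -> G) (one : G) :=
  [/\ is_group mul inv one,
      continuous (fun gh : G * G => mul gh.1 gh.2) & continuous inv].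

Definition SIN_group (G : topologicalType)
  (mul : G -> G -> G) (inv : G -> G) (one : G) :=
  forall U : set G, nbhs one U ->
    exists W : set G, [/\ nbhs one W, W `<=` U &
      forall g w, W w -> W (mul (mul g w) (inv g))].

Definition principal_action (G E X : topologicalType)
  (mul : G -> G -> G) (one : G) (p : E -> X) (act : E -> G -> E) :=
  [/\ continuous p,
      continuous (fun eg : E * G => act eg.1 eg.2),
      (forall e, act e one = e),
      (forall e g h, act (act e g) h = act e (mul g h)) &
      (forall e g, p (act e g) = p e)].

(* xi is trivial over U: a G-equivariant homeomorphism U x G ~ p^{-1}(U) over U,
   given by psi : U x G -> p^{-1}(U) and its inverse e |-> (p e, phi e). *)
Definition trivial_over (G E X : topologicalType)
  (mul : G -> G -> G) (p : E -> X) (act : E -> G -> E) (U : set X) :=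
  exists (psi : X -> G -> E) (phi : E -> G),
  [/\ {within [set xg : X * G | U xg.1], continuous (fun xg => psi xg.1 xg.2)},
      {within p @^-1` U, continuous phi},
      (forall x g, U x -> p (psi x g) = x) &
      [/\ (forall x g h, U x -> psi x (mul g h) = act (psi x g) h),
      (forall e, U (p e) -> psi (p e) (phi e) = e) &
      (forall x g, U x -> phi (psi x g) = g)]].

Definition numerable_cover (X : topologicalType) (J : eqType)
  (Uc : J -> set X) (u : J -> X -> Rdefinitions.R) :=
  [/\ (forall j, open (Uc j)),
      (forall j, continuous (u j)),
      (forall j x, 0 <= u j x <= 1),
      (forall j x, u j x != 0 -> Uc j x) &
      [/\ (forall x : X, exists N : set X, nbhs x N /\ exists s : seq J,
          forall j, (exists y, N y /\ u j y != 0) -> j \in s) &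
      (forall x, exists s : seq J, [/\ uniq s,
          (forall j, u j x != 0 -> j \in s) & \sum_(j <- s) u j x = 1])]].

Definition numerable_principal_bundle (G E X : topologicalType)
  (mul : G -> G -> G) (one : G) (p : E -> X) (act : E -> G -> E) :=
  principal_action mul one p act /\
  exists (J : eqType) (Uc : J -> set X) (u : J -> X -> Rdefinitions.R),
    numerable_cover Uc u /\ forall j, trivial_over mul p act (Uc j).

Definition is_gauge (G E X : topologicalType) (p : E -> X) (act : E -> G -> E)
  (chi : E -> E) :=
  [/\ (forall e g, chi (act e g) = act (chi e) g),
      (forall e, p (chi e) = p e),
      continuous chi &
      exists psi : E -> E, [/\ continuous psi, cancel chi psi & cancel psi chi]].

Definition VG (G : topologicalType) (inv : G -> G) (one : G) (V : set G) :=
  [/\ open V, V one & V = inv @` V].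

Definition gauge_entourage (G E X : topologicalType) (p : E -> X)
  (gamma : E -> E -> G) (K : set X) (V : set G) (chi chi' : E -> E) :=
  forall z, K (p z) -> V (gamma (chi z) (chi' z)).

Definition gauge_nbhs (G E X : topologicalType) (inv : G -> G) (one : G)
  (p : E -> X) (act : E -> G -> E) (gamma : E -> E -> G)
  (chi : E -> E) (W : set (E -> E)) :=
  exists (K : set X) (V : set G), [/\ compact K, VG inv one V &
    forall chi', is_gauge p act chi' -> gauge_entourage p gamma K V chi chi' ->
      W chi'].

Definition gauge_topological_group (G E X : topologicalType) (inv : G -> G)
  (one : G) (p : E -> X) (act : E -> G -> E) (gamma : E -> E -> G) :=
  let gauge := is_gauge p act in
  let nb := gauge_nbhs inv one p act gamma in
  [/\
      gauge id,
      (forall a b, gauge a -> gauge b -> gauge (a \o b)),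
      (forall a a', gauge a -> cancel a a' -> cancel a' a -> gauge a'),
      (forall a b U, gauge a -> gauge b -> nb (a \o b) U ->
         exists Ua Ub, [/\ nb a Ua, nb b Ub &
           forall a' b', gauge a' -> gauge b' -> Ua a' -> Ub b' -> U (a' \o b')]) &
      (forall a ainv U, gauge a -> cancel a ainv -> cancel ainv a ->
         nb ainv U ->
         exists W, nb a W /\
           forall a' a'inv, gauge a' -> cancel a' a'inv -> cancel a'inv a' ->
             W a' -> U a'inv)].

Definition gauge_SIN (G E X : topologicalType) (inv : G -> G)
  (one : G) (p : E -> X) (act : E -> G -> E) (gamma : E -> E -> G) :=
  let gauge := is_gauge p act in
  let nb := gauge_nbhs inv one p act gamma in
  forall U, nb id U ->
    exists W, [/\ nb id W, (forall c, gauge c -> W c -> U c) &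
      forall c cinv w, gauge c -> cancel c cinv -> cancel cinv c ->
        gauge w -> W w -> W (c \o w \o cinv)].

(* Main.v *)
Require Import Defs.
From mathcomp Require Import all_boot all_classical all_reals all_analysis.
From mathcomp Require Import Rstruct Rstruct_topology.
Local Open Scope classical_set_scope.

Theorem proposition3p1 (G E X : topologicalType)
  (mul : G -> G -> G) (inv : G -> G) (one : G)
  (p : E -> X) (act : E -> G -> E) (gamma : E -> E -> G) :
  is_topological_group mul inv one ->
  SIN_group mul inv one ->
  numerable_principal_bundle mul one p act ->
  (forall y z, p y = p z -> y = act z (gamma y z)) ->
  gauge_topological_group inv one p act gamma /\
  gauge_SIN inv one p act gamma.
Proof.
move=> [[massoc mul1 mulr1 mulV mulrV] mulC invC] _
  [[pc actc act1 actA pact] [J [Uc [u [[_ _ _ ucov [_ usum]] triv]]]]] Hg.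
have cancel_l : forall a g h, mul a g = mul a h -> g = h.
  move=> a g h e.
  by rewrite -(mul1 g) -(mulV a) -massoc e massoc mulV mul1.
have invE : forall h g, mul h g = one -> g = inv h.
  by move=> h g e; apply: (cancel_l h); rewrite e mulrV.
have invK : forall a, inv (inv a) = a.
  by move=> a; symmetry; apply: invE; exact: mulV.
have inv1 : inv one = one by symmetry; apply: invE; exact: mul1.
have free : forall e g h, act e g = act e h -> g = h.
  move=> e g h Eq.
  have [s [_ _ s1]] := usum (p e).
  have [j js uj] : exists2 j, j \in s & (u j (p e) != 0)%R.
    case: (pselect (exists2 j, j \in s & (u j (p e) != 0)%R)) => // H; exfalso.
    move: s1; rewrite big1_seq => [/eqP|]; first by rewrite eq_sym ssralg.GRing.oner_eq0.
    move=> k /andP[_ ks]; case: (eqVneq (u k (p e)) 0%R) => // nz.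
    by exfalso; apply: H; exists k.
  have Ux := ucov j _ uj.
  have [psi [phi [_ _ ppsi [psiM psiphi phipsi]]]] := triv j.
  have ee := psiphi e Ux.
  have key : forall k, phi (act e k) = mul (phi e) k.
    by move=> k; rewrite -{1}ee -psiM // phipsi.
  by apply: (cancel_l (phi e)); rewrite -!key Eq.
have gam : forall y z g, act z g = y -> gamma y z = g.
  move=> y z g Eq; apply: (free z).
  have pyz : p y = p z by rewrite -Eq pact.
  by rewrite -(Hg _ _ pyz) Eq.
have gE : forall chi chi' z, is_gauge p act chi -> is_gauge p act chi' ->
    act (chi' z) (gamma (chi z) (chi' z)) = chi z.
  move=> chi chi' z [_ P1 _ _] [_ P2 _ _].
  by rewrite -Hg // P1 P2.
have gid : is_gauge p act id.
  split => //; first by move=> x A.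
  by exists id; split => //; by move=> x A.
have gcomp : forall a b, is_gauge p act a -> is_gauge p act b ->
    is_gauge p act (a \o b).
  move=> a b [aE aP aC [ai [aiC aK aiK]]] [bE bP bC [bi [biC bK biK]]].
  split.
  - by move=> e g /=; rewrite bE aE.
  - by move=> e /=; rewrite aP bP.
  - by move=> x; apply: continuous_comp; [exact: bC | exact: aC].
  - exists (bi \o ai); split.
    + by move=> x; apply: continuous_comp; [exact: aiC | exact: biC].
    + by move=> x /=; rewrite aK bK.
    + by move=> x /=; rewrite biK aiK.
have ginv : forall a a', is_gauge p act a -> cancel a a' -> cancel a' a ->
    is_gauge p act a'.
  move=> a a' [aE aP aC [ai [aiC aK aiK]]] K1 K2.
  have ea : a' = ai.
    by apply/funext => x; rewrite -{1}(aiK x) K1.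
  subst ai; split.
  - by move=> e g; apply: (can_inj K1); rewrite aE !K2.
  - by move=> e; rewrite -{2}(K2 e) aP.
  - exact: aiC.
  - by exists a.
have Vhalf : forall V, open V -> V one -> exists W, VG inv one W /\
    (forall h1 h2, W h1 -> W h2 -> V (mul h1 h2)).
  move=> V Vo V1.
  have : nbhs (one, one) ((fun gh : G * G => mul gh.1 gh.2) @^-1` V).
    apply: (mulC (one, one)); rewrite /= mul1; apply: open_nbhs_nbhs; by split.
  move=> [[A B] /= [nA nB] sub].
  pose O := A° `&` B°.
  have Oo : open O by apply: openI; exact: open_interior.
  exists (O `&` inv @^-1` O); split.
    split.
    - apply: openI => //; apply: open_comp => //; move=> x _; exact: invC.
    - by split; [split|rewrite /= inv1; split].
    - apply/seteqP; split => x.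
      + move=> [Ox Oix]; exists (inv x); last by rewrite invK.
        by split; rewrite //= invK.
      + by move=> [y [Oy Oiy] <-]; split; rewrite //= invK.
  move=> h1 h2 [[Ah1 _] _] [[_ Bh2] _]; apply: (sub (h1, h2)).
  by split; apply: interior_subset.
split.
  split.
  - exact: gid.
  - exact: gcomp.
  - exact: ginv.
  - move=> a b U ga gb [K [V [cK [Vo V1 Vs] HU]]].
    have [W [VW HW]] := Vhalf V Vo V1.
    exists (gauge_entourage p gamma K W a), (gauge_entourage p gamma K W b).
    split.
    + by exists K, W; split.
    + by exists K, W; split.
    + move=> a' b' ga' gb' Ha Hb; apply: HU; first exact: gcomp.
      move=> z Kz /=.
      have pb' : p (b' z) = p z by case: gb' => _ P _ _; rewrite P.
      have -> : gamma (a (b z)) (a' (b' z)) =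
          mul (gamma (a (b' z)) (a' (b' z))) (gamma (b z) (b' z)).
        apply: gam; rewrite -actA gE //.
        by case: ga => aE _ _ _; rewrite -aE gE.
      by apply: HW; [apply: Ha; rewrite pb' | apply: Hb].
  - move=> a ai U ga K1 K2 [K [V [cK [Vo V1 Vs] HU]]].
    exists (gauge_entourage p gamma K V a); split; first by exists K, V; split.
    move=> a' a'i ga' K1' K2' Ha; apply: HU; first exact: (ginv a').
    move=> z Kz.
    have py : p (a'i z) = p z by case: ga' => _ P _ _; rewrite -{2}(K2' z) P.
    have Hh : _ := Ha (a'i z); rewrite py in Hh; specialize (Hh Kz).
    have -> : gamma (ai z) (a'i z) = inv (gamma (a (a'i z)) (a' (a'i z))).
      apply: gam; apply: (can_inj K1); rewrite K2.
      have e1 := gE a a' (a'i z) ga ga'.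
      set h := gamma _ _ in e1 *.
      case: (ga) => aE _ _ _; rewrite aE -e1 actA mulrV act1.
      by rewrite K2'.
    by rewrite Vs; exists (gamma (a (a'i z)) (a' (a'i z))).
move=> U [K [V [cK VV HU]]].
exists (gauge_entourage p gamma K V id); split.
- by exists K, V; split.
- by move=> c gc Wc; apply: HU.
- move=> c ci w gc K1 K2 gw Ww z Kz /=.
  have gci := ginv c ci gc K1 K2.
  have py : p (ci z) = p z by case: gci => _ P _ _; rewrite P.
  have Hh : _ := Ww (ci z); rewrite py in Hh; specialize (Hh Kz).
  have -> : gamma z (c (w (ci z))) = gamma (ci z) (w (ci z)).
    apply: gam; case: (gc) => cE _ _ _; rewrite -cE.
    by rewrite (gE id w (ci z)) // K2.
  exact: Hh.
Qed.
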